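(* Let $T=(V,E)$ be an $X$-tree and $f$ an interior edge of $T$. For each basis $B$ of $\mathbb{M}(T/f)$ and each cord $xy\in\binom{X}{2}$, let $\rho_{xy}\in\mathbb{R}^B$ be the unique map with $\lambda^{T/f}_{xy}=\sum_{b\in B}\rho_{xy}(b)\lambda^{T/f}_b$. Then the set $\mathbb{B}(T)$ of bases of $\mathbb{M}(T)$ equals $$\Big\{\{xy\}\cup B:\ xy\in\tbinom{X}{2},\ B\in\mathbb{B}(T/f),\ \sum_{b\in B}\rho_{xy}(b)\,\delta_{f|b}\neq\delta_{f|xy}\Big\},$$ where for a cord $zz'$, $\delta_{f|zz'}=1$ if $f\in E(z|z')$ and $\delta_{f|zz'}=0$ otherwise.
   Context: Let $X$ be a finite set with $|X|=n\ge 3$. An $X$-tree is a finite tree $T=(V,E)$ whose set of degree-1 vertices is exactly $X$ and which has no vertices of degree $2$; interior edges are edges not containing a leaf. A cord is a $2$-subset $\{x,y\}$ of $X$, written $xy$. $E(u|v)$ is the set of edges on the path from $u$ to $v$ in $T$. For each cord $xy$, $\lambda^T_{xy}:\mathbb{R}^E\to\mathbb{R}$, $\omega\mapsto\sum_{e\in E(x|y)}\omega(e)$. $\mathbb{M}(T)$ is the matroid on ground set $\binom{X}{2}$ represented over $\mathbb{R}$ by $xy\mapsto\lambda^T_{xy}$ (rank function $\mathrm{rk}^T(\mathcal{L})=\dim\mathrm{span}\{\lambda^T_{xy}:xy\in\mathcal{L}\}$); its rank is $|E|$ and $\mathbb{B}(T)$ denotes its set of bases. $T/f$ is the $X$-tree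 obtained by contracting the edge $f$, with edge set identified with $E-\{f\}$ and paths inherited from $T$. *)

(* Defs.v *)
From HB Require Import structures.
From mathcomp Require Import all_boot all_order all_algebra.
Set Implicit Arguments. Unset Strict Implicit. Unset Printing Implicit Defensive.
Import Order.TTheory GRing.Theory Num.Theory.

Section XTree.
Variable V : finType.
Variable adj : rel V.

Definition nbhd (u : V) : {set V} := [set v | adj u v].
Definition deg (u : V) : nat := #|nbhd u|.
(* X = the set of degree-1 vertices *)
Definition leaves : {set V} := [set u | deg u == 1%N].
Definition edges : {set {set V}} := [set e : {set V} | [exists u : V, [exists v : V, adj u v && (e == [set u; v])]]].

Definition is_Xtree : Prop :=
  [/\ symmetric adj /\ irreflexive adj,
      (forall u v, connect adj u v),
      (forall (u : V) (p q : seq V), path adj u p -> path adj u q ->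
          uniq (u :: p) -> uniq (u :: q) -> last u p = last u q -> p = q),
      (forall u, deg u != 2%N) & (3 <= #|leaves|)%N].

Definition interior_edge (f : {set V}) : Prop :=
  f \in edges /\ [disjoint f & leaves].

Definition pedges (u : V) (p : seq V) : {set {set V}} :=
  [set e | has (fun ab : V * V => e == [set ab.1; ab.2]) (zip (u :: p) p)].

Definition Epath (u v : V) : {set {set V}} :=
  [set e | [exists k : 'I_#|V|, [exists t : k.-tuple V,
     [&& path adj u t, uniq (u :: t), last u t == v & e \in pedges u t]]]].

Definition cord (c : {set V}) : bool := (c \subset leaves) && (#|c| == 2%N).

Definition Ecord (c : {set V}) : {set {set V}} :=
  [set e | [exists x : V, [exists y : V, (c == [set x; y]) && (e \in Epath x y)]]].

Definition delta (R : realFieldType) (f c : {set V}) : R := (f \in Ecord c)%:R.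

(* lambda^T_c, as its coefficient vector (indicator of E(x|y)) in R^E
   (coordinates indexed by {set V}; non-edge coordinates are always 0). *)
Definition lam (R : realFieldType) (c e : {set V}) : R := (e \in Ecord c)%:R.

(* lambda^{T/f}_c : edge set E - {f}, paths inherited from T *)
Definition lamC (R : realFieldType) (f c e : {set V}) : R :=
  ((e \in Ecord c) && (e != f))%:R.

Definition indep (R : realFieldType) (L : {set V} -> {set V} -> R)
    (B : {set {set V}}) : Prop :=
  forall a : {set V} -> R,
    (forall e, (\sum_(b in B) a b * L b e)%R = 0%R) -> forall b, b \in B -> a b = 0%R.

Definition is_basis (R : realFieldType) (L : {set V} -> {set V} -> R)
    (B : {set {set V}}) : Prop :=
  [/\ (forall b, b \in B -> cord b), indep L B &
      (forall c, cord c -> c \notin B -> ~ indep L (c |: B))].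

End XTree.

(* Main.v *)
Require Import Defs.
From HB Require Import structures.
From mathcomp Require Import all_boot all_order all_algebra.
From mathcomp Require Import zify ring.
From Stdlib Require Import Classical.
Set Implicit Arguments. Unset Strict Implicit. Unset Printing Implicit Defensive.
Import Order.TTheory GRing.Theory Num.Theory.

Section Tree.
Variables (V : finType) (adj : rel V).
Hypothesis Hsym : symmetric adj.
Hypothesis Hirr : irreflexive adj.
Hypothesis Huniq : forall (u : V) (p q : seq V), path adj u p -> path adj u q ->
          uniq (u :: p) -> uniq (u :: q) -> last u p = last u q -> p = q.

Definition sp x p y := [&& path adj x p, uniq (x :: p) & last x p == y].

Lemma sp_unique x p q y : sp x p y -> sp x q y -> p = q.
Proof.
case/and3P=> P1 U1 /eqP L1; case/and3P=> P2 U2 /eqP L2.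
by apply: (Huniq P1 P2 U1 U2); rewrite L1 L2.
Qed.

Lemma sp_exists x y : connect adj x y -> exists p, sp x p y.
Proof.
case/connectP=> p Hp ->; case: (shortenP Hp) => p' Hp' Hu' _.
by exists p'; rewrite /sp Hp' Hu' eqxx.
Qed.

Lemma Epath_sp x p y : sp x p y -> Epath adj x y = pedges x p.
Proof.
move=> Hs; apply/setP=> e; rewrite inE; apply/existsP/idP.
  case=> k /existsP [t /and4P [Hp Hu Hl He]].
  have Ht : sp x t y by rewrite /sp Hp Hu Hl.
  by rewrite -(sp_unique Ht Hs).
move=> He.
have Hk : size p < #|V|.
  case/and3P: Hs => _ Hu _.
  have := max_card (mem (x :: p)); rewrite (card_uniqP Hu) /=. by [].
exists (Ordinal Hk); apply/existsP; exists (in_tuple p).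
by case/and3P: Hs => -> -> -> /=.
Qed.

Lemma pedges_nil (u : V) : pedges u [::] = set0.
Proof. by apply/setP=> e; rewrite !inE. Qed.

Lemma pedges_cons (u w : V) s : pedges u (w :: s) = [set u; w] |: pedges w s.
Proof. by apply/setP=> e; rewrite !inE. Qed.

Lemma pedges_cat (u : V) s1 s2 :
  pedges u (s1 ++ s2) = pedges u s1 :|: pedges (last u s1) s2.
Proof.
elim: s1 u => [|w s1 IH] u /=; first by rewrite pedges_nil set0U.
by rewrite !pedges_cons IH setUA.
Qed.

Lemma last_rev_belast (x : V) s : last (last x s) (rev (belast x s)) = x.
Proof.
case/lastP: s => [|s y] //=.
by rewrite last_rcons belast_rcons rev_cons last_rcons.
Qed.

Lemma pedges_rev (u : V) s : pedges (last u s) (rev (belast u s)) = pedges u s.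
Proof.
elim: s u => [|w s IH] u /=; first by rewrite pedges_nil.
rewrite rev_cons -cats1 pedges_cat IH last_rev_belast pedges_cons pedges_cons pedges_nil.
by rewrite setU0 setUC; apply/setP=> e; rewrite !inE setUC.
Qed.

Lemma last_take_index (x y : V) s : y \in x :: s ->
  last x (take (index y (x :: s)) s) = y.
Proof.
elim: s x => [|a s IH] x /=.
  by rewrite inE => /eqP ->.
case: (eqVneq x y) => [-> //|nxy].
rewrite inE eq_sym (negbTE nxy) /= => Hy.
by rewrite IH.
Qed.

Lemma sp_prefix x p y w : sp x p y -> w \in x :: p ->
  sp x (take (index w (x :: p)) p) w.
Proof.
case/and3P=> Hp Hu _ Hw.
rewrite /sp take_path //= last_take_index // eqxx andbT.
by have := take_uniq (index w (x :: p)).+1 Hu.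
Qed.

Lemma sp_disj x p y q z : sp x p y -> sp x q z -> head x p != head x q ->
  forall w, w \in p -> w \notin q.
Proof.
move=> Hp Hq Hh w wp; apply/negP=> wq.
have Hp' := sp_prefix Hp (_ : w \in x :: p); rewrite inE wp orbT in Hp'.
have Hq' := sp_prefix Hq (_ : w \in x :: q); rewrite inE wq orbT in Hq'.
have E := sp_unique (Hp' isT) (Hq' isT).
case/and3P: Hp => _ /= /andP [xp _] _.
case/and3P: Hq => _ /= /andP [xq _] _.
have nxw : x != w by apply: contraNneq xp => ->.
move: E Hh; rewrite /= (negbTE nxw).
case: p wp {xp Hp'} => [//|a p] _; case: q wq {xq Hq'} => [//|b q] _ /=.
by case=> -> _; rewrite eqxx.
Qed.

Lemma pedges_mem (u : V) s e : path adj u s -> e \in pedges u s ->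
  exists a b, [/\ a \in u :: s, b \in u :: s, adj a b & e = [set a; b]].
Proof.
elim: s u => [|w s IH] u; first by rewrite pedges_nil inE.
rewrite pedges_cons /= => /andP [Huw Hp]; rewrite in_setU in_set1 => /orP [/eqP ->|He].
  by exists u, w; split => //; rewrite !inE ?eqxx ?orbT.
have [a [b [Ha Hb Hab ->]]] := IH w Hp He.
by exists a, b; split=> //; rewrite inE ?Ha ?Hb orbT.
Qed.

Lemma sp_rev x p y : sp x p y -> sp y (rev (belast x p)) x.
Proof.
case/and3P=> Hp Hu /eqP <-.
rewrite /sp last_rev_belast eqxx andbT rev_path.
have -> : path (fun z : V => adj^~ z) x p = path adj x p.
  by apply: eq_path => a b; rewrite Hsym.
by rewrite Hp -rev_rcons -lastI rev_uniq.
Qed.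

Lemma Epath_sym x y : connect adj x y -> Epath adj x y = Epath adj y x.
Proof.
move=> /sp_exists [p Hp].
rewrite (Epath_sp Hp) (Epath_sp (sp_rev Hp)).
case/and3P: Hp => _ _ /eqP <-; by rewrite pedges_rev.
Qed.

Lemma sp_join x p y q z : sp x p y -> sp x q z -> p != [::] -> q != [::] ->
  head x p != head x q ->
  [/\ y != z, Epath adj y z = pedges x p :|: pedges x q &
      forall e, e \in pedges x p -> e \notin pedges x q].
Proof.
move=> Hp Hq p0 q0 Hh.
have D := sp_disj Hp Hq Hh.
have Hp0 := Hp; have Hq0 := Hq.
case/and3P: Hp => Pp Up /eqP Ly; case/and3P: Hq => Pq Uq /eqP Lz.
split.
- apply/eqP=> Eyz.
  have zq : z \in q.
    rewrite -Lz; case: q q0 {Pq Uq Lz Hq0 Hh D} => [//|b q] _ /=.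
    exact: mem_last.
  have : z \in x :: p by rewrite -Eyz -Ly mem_last.
  rewrite inE => /orP [/eqP zx|zp].
    by move: Uq; rewrite /= -zx zq.
  by have := D z zp; rewrite zq.
- have Hr : sp y (rev (belast x p) ++ q) z.
    have := sp_rev Hp0; case/and3P=> Pr Ur /eqP Lr.
    rewrite /sp cat_path Pr Lr Pq last_cat Lr Lz eqxx andbT.
    rewrite -cat_cons -Ly -rev_rcons -lastI cat_uniq rev_uniq Up.
    move: Uq; rewrite cons_uniq => /andP [xq ->]; rewrite andbT.
    rewrite /= andbT; apply/hasPn=> w wq; rewrite mem_rev inE negb_or (contraL (D w) wq) andbT.
    by apply: contraNneq xq => <-.
  rewrite (Epath_sp Hr) pedges_cat.
  have := sp_rev Hp0; case/and3P=> _ _ /eqP ->.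
  by rewrite -Ly pedges_rev.
- move=> e ep; apply/negP=> eq.
  have [a [b [Ha Hb Hab E1]]] := pedges_mem Pp ep.
  have [a' [b' [Ha' Hb' _ E2]]] := pedges_mem Pq eq.
  have inq : forall c, c \in e -> c \in x :: q.
    by move=> c; rewrite E2 !inE => /orP [] /eqP ->.
  have onlyx : forall c, c \in x :: p -> c \in x :: q -> c = x.
    move=> c; rewrite inE => /orP [/eqP -> //|cp] cq.
    move: cq; rewrite inE (negbTE (D c cp)) orbF => /eqP //.
  have ax : a = x by apply: onlyx Ha (inq a _); rewrite E1 set21.
  have bx : b = x by apply: onlyx Hb (inq b _); rewrite E1 set22.
  by move: Hab; rewrite ax bx Hirr.
Qed.

Lemma set2_cases (y z a b : V) : [set y; z] = [set a; b] ->
  (a = y /\ b = z) \/ (a = z /\ b = y).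
Proof.
move/setP=> E.
have Ha := E a; have Hb := E b; have Hy := E y; have Hz := E z.
rewrite !inE !eqxx ?orbT /= in Ha Hb Hy Hz.
case/orP: Ha => /eqP Ea; case/orP: Hb => /eqP Eb; subst a b.
- by rewrite orbb in Hz; move/esym/eqP: Hz => ->; left.
- by left.
- by right.
- by rewrite orbb in Hy; move/esym/eqP: Hy => ->; left.
Qed.

Hypothesis Hconn : forall a b, connect adj a b.

Lemma Ecord_pair (y z : V) : Ecord adj [set y; z] = Epath adj y z.
Proof.
apply/setP=> e; rewrite inE; apply/existsP/idP.
  case=> a /existsP [b /andP [/eqP E He]].
  case: (set2_cases E) He => [[-> ->] //|[-> ->]].
  by rewrite Epath_sym.
by move=> He; exists y; apply/existsP; exists z; rewrite eqxx He.
Qed.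

Lemma leaf_branch x w : adj x w ->
  exists l p, [/\ sp x p l, p != [::], head x p = w & l \in leaves adj].
Proof.
move=> Hxw.
suff H : forall k p, k = #|V| - size p -> path adj x p -> uniq (x :: p) ->
    p != [::] -> head x p = w ->
    exists l p, [/\ sp x p l, p != [::], head x p = w & l \in leaves adj].
  apply: (H _ [:: w] erefl) => //=; rewrite ?Hxw ?inE //.
  by rewrite andbT; apply: contraTneq Hxw => ->; rewrite Hirr.
elim/ltn_ind=> k IH p Hk Hp Hu p0 Hh.
case/lastP: p Hk Hp Hu p0 Hh => [//|p' l] Hk Hp Hu _ Hh.
case: (boolP (l \in leaves adj)) => Hl.
  by exists l, (rcons p' l); rewrite /sp Hp Hu last_rcons eqxx; split=> //; case: p' {Hk Hp Hu Hh}.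
set pr := last x p'.
have Hprl : adj pr l by move: Hp; rewrite rcons_path => /andP [].
have [y [Hly ypr]] : exists y, adj l y /\ y != pr.
  have pin : pr \in nbhd adj l by rewrite inE Hsym.
  have : 1 < #|nbhd adj l|.
    move: Hl; rewrite inE /deg => Hl.
    have : 0 < #|nbhd adj l| by apply/card_gt0P; exists pr.
    by case: #|nbhd adj l| Hl => [|[|n]].
  case/card_gt1P=> y1 [y2 [H1 H2 H12]].
  rewrite !inE in H1 H2.
  case: (eqVneq y1 pr) => [E1|N1]; last by exists y1.
  by exists y2; split=> //; rewrite -E1 eq_sym.
have ynl : y != l by apply: contraTneq Hly => ->; rewrite Hirr.
case: (boolP (y \in x :: rcons p' l)) => Hy.
  have Hy' : y \in x :: p'.
    by move: Hy; rewrite -rcons_cons mem_rcons inE (negbTE ynl).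
  set i := index y (x :: p').
  have Pp' : path adj x p' by move: Hp; rewrite rcons_path => /andP [].
  have Lt := last_take_index Hy'.
  have Hq : sp x (rcons (take i p') l) l.
    rewrite /sp rcons_path take_path //= Lt Hsym Hly last_rcons eqxx andbT.
    rewrite /= -cons_uniq -rcons_cons rcons_uniq.
    move: Hu; rewrite -rcons_cons rcons_uniq => /andP [lnin Up'].
    have -> : x :: take i p' = take i.+1 (x :: p') by [].
    rewrite take_uniq // andbT; apply: contra lnin; exact: mem_take.
  have Hp2 : sp x (rcons p' l) l by rewrite /sp Hp Hu last_rcons eqxx.
  have E := sp_unique Hq Hp2.
  case: (rcons_inj E) => E2.
  by move: ypr; rewrite /pr -E2 Lt eqxx.
have Hp3 : path adj x (rcons (rcons p' l) y) by rewrite rcons_path Hp last_rcons Hly.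
have Hu3 : uniq (x :: rcons (rcons p' l) y).
  by rewrite -rcons_cons rcons_uniq Hy Hu.
have Hsz : size (x :: rcons (rcons p' l) y) <= #|V|.
  by have := max_card (mem (x :: rcons (rcons p' l) y)); rewrite (card_uniqP Hu3).
move: Hsz; rewrite /= !size_rcons => Hsz.
apply: (IH (#|V| - size (rcons (rcons p' l) y))) => //.
- rewrite Hk !size_rcons; move: Hsz; set m := #|V|; set s := size p'; lia.
- by case: p' {Hk Hp Hu Hh pr Hprl ypr Hy Hp3 Hu3 Hsz IH}.
- by case: p' Hh {Hk Hp Hu pr Hprl ypr Hy Hp3 Hu3 Hsz IH}.
Qed.

Lemma two_nbrs u v : adj u v -> u \notin leaves adj -> deg adj u != 2 ->
  exists w1 w2, [/\ adj u w1, adj u w2, w1 != w2, w1 != v & w2 != v].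
Proof.
move=> Huv Hl H2.
have : 2 < #|nbhd adj u|.
  have : 0 < #|nbhd adj u| by apply/card_gt0P; exists v; rewrite inE.
  move: Hl H2; rewrite inE /deg.
  by case: #|nbhd adj u| => [|[|[|n]]].
case/card_gt2P=> x1 [x2 [x3 [[H1 H2' H3] [N12 N23 N31]]]].
rewrite !inE in H1 H2' H3.
case: (eqVneq x1 v) => [E1|N1].
  exists x2, x3; split=> //; first by rewrite -E1 eq_sym.
  by rewrite -E1.
case: (eqVneq x2 v) => [E2|N2].
  exists x1, x3; split=> //; first by rewrite eq_sym.
  by rewrite -E2 eq_sym.
by exists x1, x2.
Qed.

Local Open Scope ring_scope.

Lemma ind_union (R : realFieldType) (A B : {set {set V}}) e :
  (forall e, e \in A -> e \notin B) ->
  ((e \in A :|: B)%:R : R) = (e \in A)%:R + (e \in B)%:R.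
Proof.
move=> D; rewrite in_setU.
case: (boolP (e \in A)) => HA /=; last by rewrite add0r.
by rewrite (negbTE (D e HA)) addr0.
Qed.

Lemma sp_edge x y : adj x y -> sp x [:: y] y.
Proof.
move=> H; rewrite /sp /= H inE eqxx !andbT.
by apply: contraTneq H => ->; rewrite Hirr.
Qed.

Lemma four_leaves (R : realFieldType) u v : adj u v ->
  u \notin leaves adj -> v \notin leaves adj ->
  deg adj u != 2%N -> deg adj v != 2%N ->
  exists a b c d, [/\ cord adj [set a; c], cord adj [set b; d],
    cord adj [set a; b], cord adj [set c; d] &
    forall e, lam adj R [set a; c] e + lam adj R [set b; d] e
              - lam adj R [set a; b] e - lam adj R [set c; d] e
              = 2%:R * (e == [set u; v])%:R].
Proof.
move=> Huv Hu Hv Hu2 Hv2.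
have Hvu : adj v u by rewrite Hsym.
have [w1 [w2 [Hw1 Hw2 N12 N1 N2]]] := two_nbrs Huv Hu Hu2.
have [z1 [z2 [Hz1 Hz2 M12 M1 M2]]] := two_nbrs Hvu Hv Hv2.
have [a [pa [Spa na Hha La]]] := leaf_branch Hw1.
have [b [pb [Spb nb Hhb Lb]]] := leaf_branch Hw2.
have [c [pc [Spc nc Hhc Lc]]] := leaf_branch Hz1.
have [d [pd [Spd nd Hhd Ld]]] := leaf_branch Hz2.
have Svu := sp_edge Hvu.
have ext : forall pc c, sp v pc c -> pc != [::] -> head v pc != u ->
    [/\ sp u (v :: pc) c, pedges u (v :: pc) = [set u; v] |: pedges v pc &
        [set u; v] \notin pedges v pc].
  move=> q t Sq nq Hq0.
  have Hq : head v [:: u] != head v q by rewrite /= eq_sym.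
  have [_ _ D] := sp_join Svu Sq isT nq Hq.
  have Dq := sp_disj Svu Sq Hq.
  split; last 2 first.
  - by rewrite pedges_cons.
  - have := D [set v; u]; rewrite pedges_cons pedges_nil setU0 in_set1 eqxx setUC.
    by apply.
  case/and3P: Sq => Pq Uq Lq.
  rewrite /sp /= Huv Pq Lq andbT inE negb_or Dq ?inE // andbT.
  move: Uq; rewrite cons_uniq => /andP [-> ->]; rewrite !andbT /=.
  by apply: contraTneq Huv => ->; rewrite Hirr.
have h1 : head v pc != u by rewrite Hhc.
have h2 : head v pd != u by rewrite Hhd.
have [Sc Ec Dc] := ext pc c Spc nc h1.
have [Sd Ed Dd] := ext pd d Spd nd h2.
have h3 : head u pa != head u (v :: pc) by rewrite Hha.
have h4 : head u pb != head u (v :: pd) by rewrite Hhb.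
have h5 : head u pa != head u pb by rewrite Hha Hhb.
have h6 : head v pc != head v pd by rewrite Hhc Hhd.
have [Nac Eac Dac] := sp_join Spa Sc na isT h3.
have [Nbd Ebd Dbd] := sp_join Spb Sd nb isT h4.
have [Nab Eab Dab] := sp_join Spa Spb na nb h5.
have [Ncd Ecd Dcd] := sp_join Spc Spd nc nd h6.
have cordP : forall x y, x \in leaves adj -> y \in leaves adj -> x != y ->
    cord adj [set x; y].
  by move=> x y Hx Hy Nxy; rewrite /cord cards2 Nxy subUset !sub1set Hx Hy.
exists a, b, c, d; split; try by apply: cordP.
move=> e; rewrite /lam !Ecord_pair Eac Ebd Eab Ecd !ind_union //.
rewrite Ec Ed !ind_union; last 2 first.
- by move=> e'; rewrite in_set1 => /eqP ->.
- by move=> e'; rewrite in_set1 => /eqP ->.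
rewrite in_set1; ring.
Qed.

End Tree.

Section Lin.
Local Open Scope ring_scope.
Variables (V : finType) (R : realFieldType).
Implicit Types (L : {set V} -> {set V} -> R) (C : {set {set V}}).

Definition inspan L C (w : {set V} -> R) :=
  exists s : {set V} -> R, forall e, w e = \sum_(b in C) s b * L b e.

Lemma sum_pick C (c : {set V}) (F : {set V} -> R) : c \in C ->
  \sum_(b in C) (b == c)%:R * F b = F c.
Proof.
move=> Hc; rewrite (bigD1 c) //= eqxx mul1r big1 ?addr0 //.
by move=> b /andP [_ /negbTE ->]; rewrite mul0r.
Qed.

Lemma span_mem L C c : c \in C -> inspan L C (L c).
Proof.
by move=> Hc; exists (fun b => (b == c)%:R) => e; rewrite sum_pick.
Qed.

Lemma span_notindep L C c : c \notin C -> inspan L C (L c) -> ~ indep L (c |: C).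
Proof.
move=> nc [s Hs] Hind.
have := Hind (fun b => if b == c then 1 else - s b) _ c (setU11 c C).
rewrite eqxx => H; have : (1 : R) != 0 by exact: oner_neq0.
rewrite H ?eqxx // => e.
rewrite big_setU1 //= eqxx mul1r.
rewrite (eq_bigr (fun b => - (s b * L b e))); last first.
  move=> b Hb /=; case: (eqVneq b c) => [Ebc|_]; last by rewrite mulNr.
  by move: nc; rewrite -Ebc Hb.
by rewrite sumrN (Hs e) subrr.
Qed.

Lemma notindep_span L C c : indep L C -> c \notin C -> ~ indep L (c |: C) ->
  inspan L C (L c).
Proof.
move=> HI nc HN; apply: NNPP => Hns; apply: HN => a Ha.
have Hc : a c = 0.
  case: (eqVneq (a c) 0) => // Hac; exfalso; apply: Hns.
  exists (fun b => - a b / a c) => e.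
  have := Ha e; rewrite big_setU1 //= => /eqP; rewrite addr_eq0 => /eqP E.
  rewrite (eq_bigr (fun b => (- (a c)^-1) * (a b * L b e))); last first.
    by move=> b _; ring.
  have E' : \sum_(i in C) a i * L i e = - (a c * L c e) by rewrite E opprK.
  by rewrite -mulr_sumr E'; field.
have H0 : forall b, b \in C -> a b = 0.
  apply: HI => e; have := Ha e; rewrite big_setU1 //= Hc mul0r add0r //.
move=> b; rewrite in_setU1 => /orP [/eqP -> //|]; exact: H0.
Qed.

Lemma span_add L C w1 w2 : inspan L C w1 -> inspan L C w2 ->
  inspan L C (fun e => w1 e + w2 e).
Proof.
move=> [s1 H1] [s2 H2]; exists (fun b => s1 b + s2 b) => e.
by rewrite H1 H2 -big_split; apply: eq_bigr => b _; rewrite mulrDl.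
Qed.

Lemma span_opp L C w : inspan L C w -> inspan L C (fun e => - w e).
Proof.
move=> [s H]; exists (fun b => - s b) => e.
by rewrite H -sumrN; apply: eq_bigr => b _; rewrite mulNr.
Qed.

Lemma span_ext L C w1 w2 : (forall e, w1 e = w2 e) -> inspan L C w1 -> inspan L C w2.
Proof. by move=> E [s H]; exists s => e; rewrite -E H. Qed.

Lemma span_of_basis (adj : rel V) L C c : is_basis adj L C -> cord adj c -> inspan L C (L c).
Proof.
move=> [HC HI HM] Hc; case: (boolP (c \in C)) => Hin; first exact: span_mem.
exact: notindep_span HI Hin (HM c Hc Hin).
Qed.

Lemma sumLC (adj : rel V) f C (g : {set V} -> R) e :
  \sum_(b in C) g b * lamC adj R f b e =
  if e == f then 0 else \sum_(b in C) g b * lam adj R b e.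
Proof.
rewrite /lamC /lam; case: (eqVneq e f) => [->|nef].
  by rewrite big1 // => b _; rewrite andbF mulr0.
by apply: eq_bigr => b _; rewrite /= andbT.
Qed.

Lemma lamCE (adj : rel V) f c e :
  lamC adj R f c e = if e == f then 0 else lam adj R c e.
Proof.
by rewrite /lamC /lam; case: (eqVneq e f) => [->|nef]; rewrite /= ?andbF ?andbT.
Qed.

Lemma dir_back (adj : rel V) f xy B (rho : {set V} -> R) :
  cord adj xy -> is_basis adj (lamC adj R f) B ->
  (forall e, lamC adj R f xy e = \sum_(b in B) rho b * lamC adj R f b e) ->
  \sum_(b in B) rho b * delta adj R f b != delta adj R f xy ->
  is_basis adj (lam adj R) (xy |: B).
Proof.
move=> Hxy [HBc HBi HBm] Hrho Hne.
have Hne' : \sum_(b in B) rho b * lam adj R b f != lam adj R xy f := Hne.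
have Hrho' : forall e, e != f ->
    lam adj R xy e = \sum_(b in B) rho b * lam adj R b e.
  by move=> e nef; have := Hrho e; rewrite lamCE sumLC (negbTE nef).
set s := lam adj R xy f - \sum_(b in B) rho b * lam adj R b f.
have s0 : s != 0 by rewrite subr_eq0 eq_sym.
have nxy : xy \notin B.
  apply/negP => HxyB; move/negP: Hne'; apply.
  have Hz := HBi (fun b => rho b - (b == xy)%:R).
  have Hz' : forall b, b \in B -> rho b = (b == xy)%:R.
    move=> b0 Hb0; apply/eqP; rewrite -subr_eq0; apply/eqP; apply: (Hz _ b0 Hb0) => e.
    rewrite (eq_bigr (fun b => rho b * lamC adj R f b e - (b == xy)%:R * lamC adj R f b e)).
      by rewrite sumrB sum_pick // -Hrho subrr.
    by move=> b1 _; rewrite mulrBl.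
  rewrite (eq_bigr (fun b => (b == xy)%:R * lam adj R b f)) ?sum_pick //.
  by move=> b Hb; rewrite Hz'.
split.
- by move=> b; rewrite in_setU1 => /orP [/eqP -> //|]; exact: HBc.
- move=> a Ha.
  have Ha' : forall e, a xy * lam adj R xy e + \sum_(b in B) a b * lam adj R b e = 0.
    by move=> e; have := Ha e; rewrite big_setU1.
  have Hb : forall b, b \in B -> a b + a xy * rho b = 0.
    apply: HBi => e; rewrite sumLC; case: (eqVneq e f) => // nef.
    rewrite (eq_bigr (fun b => a b * lam adj R b e + a xy * (rho b * lam adj R b e))); last first.
      by move=> b _; rewrite mulrDl mulrA.
    by rewrite big_split /= -mulr_sumr -Hrho' // addrC Ha'.
  have Haxy : a xy = 0.
    have := Ha' f.
    rewrite (eq_bigr (fun b => - a xy * (rho b * lam adj R b f))); last first.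
      move=> b Hb'; have -> : a b = - (a xy * rho b).
        by apply/eqP; rewrite -addr_eq0; apply/eqP; exact: Hb.
      ring.
    rewrite -mulr_sumr => H.
    have : a xy * s = 0 by rewrite -[RHS]H /s; ring.
    by move/eqP; rewrite mulf_eq0 (negbTE s0) orbF => /eqP.
  move=> b; rewrite in_setU1 => /orP [/eqP -> //|Hb'].
  by have := Hb b Hb'; rewrite Haxy mul0r addr0.
- move=> c Hc; rewrite in_setU1 negb_or => /andP [nc1 nc2].
  have [sg Hsg] := notindep_span HBi nc2 (HBm c Hc nc2).
  apply: span_notindep; first by rewrite in_setU1 negb_or nc1 nc2.
  set t := lam adj R c f - \sum_(b in B) sg b * lam adj R b f.
  exists (fun b => if b == xy then t / s else sg b + (- (t / s)) * rho b) => e.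
  rewrite big_setU1 //= eqxx.
  rewrite (eq_bigr (fun b => sg b * lam adj R b e + (- (t / s)) * (rho b * lam adj R b e))); last first.
    move=> b Hb; rewrite ifN; first by ring.
    by apply: contraNneq nxy => <-.
  rewrite big_split /= -mulr_sumr.
  case: (eqVneq e f) => [->|nef].
    by rewrite /t; move: s0; rewrite /s => s0; field.
  have := Hsg e; rewrite lamCE sumLC (negbTE nef) => ->.
  rewrite -Hrho' //; ring.
Qed.

Lemma dir_fwd (adj : rel V) f S (k : R) :
  is_basis adj (lam adj R) S -> k != 0 ->
  inspan (lam adj R) S (fun e => k * (e == f)%:R) ->
    exists (xy : {set V}) (B : {set {set V}}),
      [/\ cord adj xy,
          is_basis adj (@lamC V adj R f) B,
          (exists rho : {set V} -> R,
              (forall e, lamC adj R f xy e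
                         = (\sum_(b in B) rho b * lamC adj R f b e)%R) /\
              (\sum_(b in B) rho b * delta adj R f b)%R != delta adj R f xy)
        & S = xy |: B].
Proof.
move=> HS k0 [tau Htau]; have [HSc HSi HSm] := HS.
have [xy HxyS Htxy] : exists2 xy, xy \in S & tau xy != 0.
  case: (boolP [exists b in S, tau b != 0]) => [/existsP [b /andP [Hb Htb]]|]; first by exists b.
  move/existsPn => H; exfalso.
  have := Htau f; rewrite eqxx mulr1 big1 => [E|b Hb]; first by move: k0; rewrite E eqxx.
  by have := H b; rewrite Hb /= negbK => /eqP ->; rewrite mul0r.
set B := S :\ xy.
have nxy : xy \notin B by rewrite setD11.
have ES : S = xy |: B by rewrite setD1K.
have Hsplit : forall (L : {set V} -> {set V} -> R) g e,
    \sum_(b in S) g b * L b e = g xy * L xy e + \sum_(b in B) g b * L b e.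
  by move=> L g e; rewrite {1}ES big_setU1.
set rho := fun b => - tau b / tau xy.
have Hrho : forall e, lamC adj R f xy e = \sum_(b in B) rho b * lamC adj R f b e.
  move=> e.
  have H0 : \sum_(b in S) tau b * lamC adj R f b e = 0.
    rewrite sumLC; case: (eqVneq e f) => [_|nef] //.
    by rewrite -Htau (negbTE nef) mulr0.
  move: H0; rewrite Hsplit => H0.
  rewrite (eq_bigr (fun b => (- (tau xy)^-1) * (tau b * lamC adj R f b e))); last first.
    by move=> b _; rewrite /rho; ring.
  have E : \sum_(b in B) tau b * lamC adj R f b e = - (tau xy * lamC adj R f xy e).
    by apply/eqP; rewrite -addr_eq0; apply/eqP; rewrite addrC.
  rewrite -mulr_sumr E; field; exact: Htxy.
have Hcond : \sum_(b in B) rho b * delta adj R f b != delta adj R f xy.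
  change (\sum_(b in B) rho b * lam adj R b f != lam adj R xy f).
  have := Htau f; rewrite eqxx mulr1 Hsplit => Hk.
  rewrite (eq_bigr (fun b => (- (tau xy)^-1) * (tau b * lam adj R b f))); last first.
    by move=> b _; rewrite /rho; ring.
  have E : \sum_(b in B) tau b * lam adj R b f = k - tau xy * lam adj R xy f.
    by rewrite Hk; ring.
  rewrite -mulr_sumr E; apply/negP; rewrite -subr_eq0 => /eqP H'.
  have : - k / tau xy = 0 by rewrite -H'; field.
  by move/eqP; rewrite mulf_eq0 invr_eq0 oppr_eq0 (negbTE k0) (negbTE Htxy).
have HBS : forall b, b \in B -> b \in S by move=> b /setD1P [].
exists xy, B; split; [exact: HSc | | by exists rho | exact: ES].
split.
- by move=> b /HBS /HSc.
- move=> a Ha.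
  set t := \sum_(b in B) a b * lam adj R b f.
  have HaL : forall e, \sum_(b in B) a b * lam adj R b e = t / k * (k * (e == f)%:R).
    move=> e; case: (eqVneq e f) => [->|nef].
      by rewrite mulr1 /t; field.
    by have := Ha e; rewrite sumLC (negbTE nef) => ->; rewrite !mulr0.
  have Hg := HSi (fun b => if b == xy then - (t / k) * tau xy else a b - (t / k) * tau b).
  have Hg' : forall b, b \in S ->
      (if b == xy then - (t / k) * tau xy else a b - (t / k) * tau b) = 0.
    apply: Hg => e; rewrite Hsplit eqxx.
    rewrite (eq_bigr (fun b => a b * lam adj R b e + (- (t / k)) * (tau b * lam adj R b e))); last first.
      move=> b Hb; rewrite ifN; first by ring.
      by apply: contraNneq nxy => <-.
    rewrite big_split /= -mulr_sumr HaL.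
    have := Htau e; rewrite Hsplit => ->; ring.
  have Ht : t = 0.
    have := Hg' xy HxyS; rewrite eqxx => /eqP.
    rewrite mulf_eq0 (negbTE Htxy) orbF oppr_eq0 mulf_eq0 invr_eq0 (negbTE k0) orbF.
    by move/eqP.
  move=> b Hb; have := Hg' b (HBS b Hb); rewrite ifN; last first.
    by apply: contraNneq nxy => <-.
  by rewrite Ht mul0r mul0r subr0.
- move=> c Hc ncB; apply: span_notindep ncB _.
  have [sg Hsg] := span_of_basis HS Hc.
  exists (fun b => sg b + sg xy * rho b) => e.
  rewrite (eq_bigr (fun b => sg b * lamC adj R f b e + sg xy * (rho b * lamC adj R f b e))); last first.
    by move=> b _; ring.
  rewrite big_split /= -mulr_sumr -Hrho.
  have -> : lamC adj R f c e = \sum_(b in S) sg b * lamC adj R f b e.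
    rewrite lamCE sumLC; case: (eqVneq e f) => // _; exact: Hsg.
  by rewrite Hsplit addrC.
Qed.

End Lin.

Theorem mainTheorem2 (R : realFieldType) (V : finType) (adj : rel V)
    (f : {set V}) :
  is_Xtree adj -> interior_edge adj f ->
  forall S : {set {set V}},
    is_basis adj (@lam V adj R) S <->
    exists (xy : {set V}) (B : {set {set V}}),
      [/\ cord adj xy,
          is_basis adj (@lamC V adj R f) B,
          (exists rho : {set V} -> R,
              (forall e, lamC adj R f xy e
                         = (\sum_(b in B) rho b * lamC adj R f b e)%R) /\
              (\sum_(b in B) rho b * delta adj R f b)%R != delta adj R f xy)
        & S = xy |: B].
Proof.
move=> [[Hsym Hirr] Hconn Huniq Hdeg Hl3] [Hfe Hfd] S.
have [u [v /andP [Huv /eqP Ef]]] : exists u v, adj u v && (f == [set u; v]).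
  by move: Hfe; rewrite inE => /existsP [u /existsP [v H]]; exists u, v.
have Hu : u \notin leaves adj by rewrite (disjointFr Hfd) // Ef set21.
have Hv : v \notin leaves adj by rewrite (disjointFr Hfd) // Ef set22.
split.
- move=> HS; apply: (@dir_fwd V R adj f S 2%:R) => //.
    by rewrite pnatr_eq0.
  have [a [b [c [d [C1 C2 C3 C4 Hid]]]]] :=
    four_leaves Hsym Hirr Huniq Hconn R Huv Hu Hv (Hdeg u) (Hdeg v).
  have S1 := span_of_basis HS C1; have S2 := span_of_basis HS C2.
  have S3 := span_opp (span_of_basis HS C3); have S4 := span_opp (span_of_basis HS C4).
  apply: span_ext (span_add (span_add (span_add S1 S2) S3) S4) => e /=.
  by rewrite Hid Ef.
- by move=> [xy [B [Hxy HB [rho [Hrho Hne]] ->]]]; exact: dir_back Hxy HB Hrho Hne.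
Qed.
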